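(* Let Assumption 1 hold and suppose $n_k\ge N-1$ for some $k\in[L-1]$. Then every non-degenerate local minimum $(W^*_l,b^*_l)_{l=1}^L$ of $\Phi$ (i.e. the full Hessian of $\Phi$ there is non-singular) for which $\operatorname{rank}(W^*_l)=n_l$ for all $l\in[k+2,L]$ is a global minimum of $\Phi$.
   Context: Training data: $X=[x_1,\dots,x_N]^T\in\mathbb{R}^{N\times d}$, $Y=[y_1,\dots,y_N]^T\in\mathbb{R}^{N\times m}$ with entries $y_{ij}$. A fully connected network with layers $0,\dots,L$ has widths $n_0=d,n_1,\dots,n_{L-1},n_L=m$, weights $W_k\in\mathbb{R}^{n_{k-1}\times n_k}$ and biases $b_k\in\mathbb{R}^{n_k}$; $\mathcal{P}$ is the space of all parameters. With $\sigma$ applied componentwise, $f_0(x)=x$, $g_k(x)=W_k^Tf_{k-1}(x)+b_k$, $f_k(x)=\sigma(g_k(x))$. The objective is $\Phi((W_k,b_k)_{k=1}^L)=\sum_{i=1}^N\sum_{j=1}^m l(f_{Lj}(x_i)-y_{ij})$, whose minimum over $\mathcal{P}$ is assumed attained. $[a]=\{1,\dots,a\}$, $[a,b]$ the integers from $a$ to $b$. Assumption 1: (1) $x_i\neq x_j$ for $i\ne j$; (2) $\sigma$ is real analytic on $\mathbb{R}$ with $\sigma'(t)>0$ for all $t$, and either $\sigma$ is bounded or there are positive $\rho_1,\dots,\rho_4$ with $|\sigma(t)|\le\rho_1e^{\rho_2t}$ for $t<0$ and $|\sigma(t)|\le\rho_3t+\rho_4$ for $t\ge0$; (3) $l\in C^2(\mathbb{R})$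 and whenever $l'(a)=0$, $a$ is a global minimizer of $l$. *)

(* Defs.v *)
From Stdlib Require Import Reals Lra Lia List.
Import ListNotations.
Open Scope R_scope.

Fixpoint rsum (n : nat) (F : nat -> R) : R :=
  match n with
  | O => 0
  | S k => rsum k F + F k
  end.

Definition lsum {A : Type} (F : A -> R) (l : list A) : R :=
  fold_right (fun a acc => F a + acc) 0 l.

(* IW k i j : entry (i,j) of W_k  (i < n_{k-1}, j < n_k), indices 0-based;
   IB k j   : entry j of b_k     (j < n_k);   layers k = 1..L. *)
Inductive pidx : Type :=
| IW (k i j : nat)
| IB (k j : nat).

Definition pidx_eq_dec (p q : pidx) : {p = q} + {p <> q}.
Proof. decide equality; apply Nat.eq_dec. Defined.

(* A point of the parameter space P: only the coordinates in [pidxs n L] matter. *)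
Definition params := pidx -> R.

Definition pidxs (n : nat -> nat) (L : nat) : list pidx :=
  flat_map (fun k =>
     flat_map (fun i => map (fun j => IW k i j) (seq 0 (n k))) (seq 0 (n (k - 1)%nat))
     ++ map (fun j => IB k j) (seq 0 (n k)))
   (seq 1 L).

Definition upd (th : params) (p : pidx) (t : R) : params :=
  fun q => if pidx_eq_dec q p then t else th q.

(* f_k(x) (componentwise), f_0(x) = x,
   g_k(x)_j = sum_{i < n_{k-1}} (W_k)_{ij} f_{k-1}(x)_i + (b_k)_j,  f_k = sigma o g_k *)
Fixpoint fk (sigma : R -> R) (n : nat -> nat) (th : params) (k : nat)
         (x : nat -> R) : nat -> R :=
  match k with
  | O => x
  | S k' => fun j =>
      sigma (rsum (n k') (fun i => th (IW (S k') i j) * fk sigma n th k' x i)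
             + th (IB (S k') j))
  end.

(* Data: X i = x_{i+1} (a vector of length d = n 0), Y i j = y_{i+1,j+1}, i < N, j < m = n L. *)
Definition Phi (sigma l : R -> R) (n : nat -> nat) (L N : nat)
           (X : nat -> nat -> R) (Y : nat -> nat -> R) (th : params) : R :=
  rsum N (fun i => rsum (n L) (fun j => l (fk sigma n th L (X i) j - Y i j))).

Definition distinct_data (N d : nat) (X : nat -> nat -> R) : Prop :=
  forall i j, (i < N)%nat -> (j < N)%nat -> i <> j ->
    exists c, (c < d)%nat /\ X i c <> X j c.

Definition real_analytic (f : R -> R) : Prop :=
  forall x0, exists (a : nat -> R) (r : R), 0 < r /\
    forall x, Rabs (x - x0) < r ->
      infinite_sum (fun k => a k * (x - x0) ^ k) (f x).

Definition sigma_assumption (sigma : R -> R) : Prop :=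
  real_analytic sigma /\
  (forall t, exists s, derivable_pt_lim sigma t s /\ 0 < s) /\
  ((exists M, forall t, Rabs (sigma t) <= M) \/
   (exists r1 r2 r3 r4, 0 < r1 /\ 0 < r2 /\ 0 < r3 /\ 0 < r4 /\
      (forall t, t < 0 -> Rabs (sigma t) <= r1 * exp (r2 * t)) /\
      (forall t, 0 <= t -> Rabs (sigma t) <= r3 * t + r4))).

Definition C2 (f : R -> R) : Prop :=
  exists f1 f2 : R -> R,
    (forall x, derivable_pt_lim f x (f1 x)) /\
    (forall x, derivable_pt_lim f1 x (f2 x)) /\
    continuity f2.

Definition loss_assumption (l : R -> R) : Prop :=
  C2 l /\
  forall a, derivable_pt_lim l a 0 -> forall t, l a <= l t.

Definition is_gradient (ps : list pidx) (F : params -> R) (G : pidx -> params -> R) : Prop :=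
  forall th p, In p ps -> derivable_pt_lim (fun t => F (upd th p t)) (th p) (G p th).

Definition is_hessian_at (ps : list pidx) (G : pidx -> params -> R) (th : params)
           (H : pidx -> pidx -> R) : Prop :=
  forall p q, In p ps -> In q ps ->
    derivable_pt_lim (fun t => G p (upd th q t)) (th q) (H p q).

Definition nonsingular (ps : list pidx) (H : pidx -> pidx -> R) : Prop :=
  forall v : pidx -> R,
    (forall p, In p ps -> lsum (fun q => H p q * v q) ps = 0) ->
    forall q, In q ps -> v q = 0.

Definition local_min (ps : list pidx) (F : params -> R) (th0 : params) : Prop :=
  exists eps, 0 < eps /\
    forall th, (forall p, In p ps -> Rabs (th p - th0 p) < eps) -> F th0 <= F th.

Definition global_min (F : params -> R) (th0 : params) : Prop :=
  forall th, F th0 <= F th.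

Definition nondeg_local_min (ps : list pidx) (F : params -> R) (th0 : params) : Prop :=
  local_min ps F th0 /\
  exists G H, is_gradient ps F G /\ is_hessian_at ps G th0 H /\ nonsingular ps H.

Definition lin_indep_cols (A : nat -> nat -> R) (p : nat) (cs : list nat) : Prop :=
  forall c : nat -> R,
    (forall i, (i < p)%nat -> lsum (fun j => c j * A i j) cs = 0) ->
    forall j, In j cs -> c j = 0.

Definition has_rank (A : nat -> nat -> R) (p q r : nat) : Prop :=
  (exists cs, NoDup cs /\ (forall j, In j cs -> (j < q)%nat) /\
              length cs = r /\ lin_indep_cols A p cs) /\
  (forall cs, NoDup cs -> (forall j, In j cs -> (j < q)%nat) ->
              length cs = S r -> ~ lin_indep_cols A p cs).

Definition Wmat (th : params) (k : nat) : nat -> nat -> R :=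
  fun i j => th (IW k i j).

(* Main.v *)
Require Import Defs.
From Stdlib Require Import Reals Lra Lia List Permutation Classical ClassicalEpsilon FunctionalExtensionality.
Open Scope R_scope.

Lemma cv_bounded (u : nat -> R) (l0 : R) :
  Un_cv u l0 -> exists M, forall n, Rabs (u n) <= M.
Proof.
  intros H. destruct (H 1 Rlt_0_1) as [N HN].
  exists (1 + Rabs l0 + sum_f_R0 (fun k => Rabs (u k)) N).
  assert (Hpos : forall m, 0 <= sum_f_R0 (fun k => Rabs (u k)) m).
  { induction m; simpl; [apply Rabs_pos| pose proof (Rabs_pos (u (S m))); lra]. }
  intros n. destruct (Compare_dec.le_lt_dec N n) as [h|h].
  - specialize (HN n h). unfold R_dist in HN.
    pose proof (Rabs_triang (u n - l0) l0). replace (u n - l0 + l0) with (u n) in H0 by ring.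
    pose proof (Hpos N). lra.
  - assert (Hg : forall N' m, (m <= N')%nat -> Rabs (u m) <= sum_f_R0 (fun k => Rabs (u k)) N').
    { induction N'; intros m Hm.
      + assert (m = O) by lia. subst. simpl. lra.
      + destruct (Nat.eq_dec m (S N')).
        * subst. simpl. pose proof (Hpos N'). lra.
        * simpl. pose proof (Rabs_pos (u (S N'))). assert (m <= N')%nat by lia.
          specialize (IHN' m H1). lra. }
    assert (Rabs (u n) <= sum_f_R0 (fun k => Rabs (u k)) N) by (apply Hg; lia).
    pose proof (Rabs_pos l0). lra.
Qed.

Lemma term_bounded (t : nat -> R) (s : R) :
  infinite_sum t s -> exists M, forall n, Rabs (t n) <= M.
Proof.
  intros H. destruct (cv_bounded _ _ H) as [M HM].
  exists (2 * M). intros n. destruct n.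
  - specialize (HM O). simpl in HM. pose proof (Rabs_pos (t O)). lra.
  - pose proof (HM (S n)). pose proof (HM n). simpl in H0.
    replace (t (S n)) with ((sum_f_R0 t n + t (S n)) - sum_f_R0 t n) by ring.
    pose proof (Rabs_triang (sum_f_R0 t n + t (S n)) (- sum_f_R0 t n)).
    rewrite Rabs_Ropp in H2. unfold Rminus. lra.
Qed.

Lemma dpl_shift (f : R -> R) (x l0 : R) :
  derivable_pt_lim f x l0 <-> derivable_pt_lim (fun h => f (x + h)) 0 l0.
Proof.
  split; intros H eps Heps; destruct (H eps Heps) as [d Hd]; exists d; intros h Hh1 Hh2;
  specialize (Hd h Hh1 Hh2).
  - replace (x + (0 + h)) with (x + h) by ring. replace (x + 0) with x by ring. exact Hd.
  - replace (x + h) with (x + (0 + h)) by ring. replace x with (x + 0) at 2 by ring. exact Hd.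
Qed.


Module AnalyticPart.
From Coquelicot Require Import Coquelicot.
Lemma analytic_d2 (f f1 : R -> R) :
  real_analytic f -> (forall x, derivable_pt_lim f x (f1 x)) ->
  forall x0, exists s, derivable_pt_lim f1 x0 s.
Proof.
  intros Ha Hd x0. destruct (Ha x0) as [a [r [Hr Hs]]].
  set (y := r / 2).
  assert (Hy : 0 < y) by (unfold y; lra).
  assert (Hrad : Rbar_le (Finite y) (CV_radius a)).
  { destruct (CV_radius_bounded a) as [Hub _]. apply Hub.
    assert (Hin : Rabs (x0 + y - x0) < r) by (replace (x0 + y - x0) with y by ring; rewrite Rabs_right; unfold y; lra).
    destruct (term_bounded _ _ (Hs _ Hin)) as [M HM]. exists M. intros k.
    specialize (HM k). replace (x0 + y - x0) with y in HM by ring. exact HM. }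
  assert (Heq : forall h, Rabs h < y -> f (x0 + h) = PSeries a h).
  { intros h Hh. symmetry. apply is_pseries_unique.
    assert (Hin : Rabs (x0 + h - x0) < r) by (replace (x0 + h - x0) with h by ring; unfold y in Hh; lra).
    specialize (Hs _ Hin). apply is_series_Reals in Hs.
    unfold is_pseries. eapply is_series_ext; [|exact Hs].
    intros k. simpl.
    unfold scal; simpl. unfold mult; simpl. assert (Hp : forall j, pow_n (K:=R_AbsRing) h j = h ^ j) by (induction j; simpl; [reflexivity| rewrite <- IHj; reflexivity]). rewrite Hp. replace (x0 + h - x0) with h by ring. ring. }
  assert (Hlt : forall h, Rabs h < y -> Rbar_lt (Rabs h) (CV_radius a)).
  { intros h Hh. destruct (CV_radius a) as [c| |]; simpl in *; try tauto; lra. }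
  assert (Heq1 : forall h, Rabs h < y -> f1 (x0 + h) = PSeries (PS_derive a) h).
  { intros h Hh.
    assert (D1 : is_derive (fun z => f (x0 + z)) h (f1 (x0 + h))).
    { apply is_derive_Reals.
      assert (Hl : derivable_pt_lim (fun z => x0 + z) h 1).
      { replace 1 with (0 + 1) by ring. apply derivable_pt_lim_plus; [apply derivable_pt_lim_const|apply derivable_pt_lim_id]. }
      pose proof (derivable_pt_lim_comp _ f h 1 (f1 (x0 + h)) Hl (Hd _)) as Hc.
      rewrite Rmult_1_r in Hc. exact Hc. }
    assert (D2 : is_derive (PSeries a) h (PSeries (PS_derive a) h)) by (apply is_derive_PSeries; auto).
    assert (D3 : is_derive (fun z => f (x0 + z)) h (PSeries (PS_derive a) h)).
    { eapply is_derive_ext_loc; [|exact D2].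
      assert (Hp : 0 < y - Rabs h) by lra.
      exists (mkposreal _ Hp). intros z Hz. change R in z.
      assert (Hz' : Rabs (z - h) < y - Rabs h) by exact Hz. clear Hz.
      symmetry. apply Heq.
      pose proof (Rabs_triang (z - h) h). replace (z - h + h) with z in H by ring. lra. }
    apply is_derive_Reals in D1. apply is_derive_Reals in D3.
    eapply uniqueness_limite; eauto. }
  exists (PSeries (PS_derive (PS_derive a)) 0).
  apply dpl_shift. apply is_derive_Reals.
  eapply is_derive_ext_loc; [| apply is_derive_PSeries].
  - exists (mkposreal _ Hy). intros z Hz. change R in z. change R in z.
    assert (Hz' : Rabs (z - 0) < y) by exact Hz. clear Hz.
    rewrite Rminus_0_r in Hz'. symmetry. apply Heq1. exact Hz'.
  - rewrite CV_radius_derive. apply Hlt. rewrite Rabs_R0. exact Hy.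
Qed.

End AnalyticPart.
Import AnalyticPart.

Lemma dpl_mult' (f g : R -> R) x l1 l2 :
  derivable_pt_lim f x l1 -> derivable_pt_lim g x l2 ->
  derivable_pt_lim (fun t => f t * g t) x (l1 * g x + f x * l2).
Proof. intros; apply (derivable_pt_lim_mult f g); auto. Qed.

Lemma dpl_plus' (f g : R -> R) x l1 l2 :
  derivable_pt_lim f x l1 -> derivable_pt_lim g x l2 ->
  derivable_pt_lim (fun t => f t + g t) x (l1 + l2).
Proof. intros; apply (derivable_pt_lim_plus f g); auto. Qed.

Lemma dpl_comp' (f g : R -> R) x l1 l2 :
  derivable_pt_lim f x l1 -> derivable_pt_lim g (f x) l2 ->
  derivable_pt_lim (fun t => g (f t)) x (l2 * l1).
Proof. intros; apply (derivable_pt_lim_comp f g); auto. Qed.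

Lemma dpl_const' (c x : R) : derivable_pt_lim (fun _ => c) x 0.
Proof. apply derivable_pt_lim_const. Qed.

Lemma dpl_ext (f g : R -> R) x l0 :
  (forall t, f t = g t) -> derivable_pt_lim f x l0 -> derivable_pt_lim g x l0.
Proof.
  intros He H. replace g with f; auto. apply functional_extensionality; auto.
Qed.

Lemma dpl_val (f : R -> R) x l1 l2 : derivable_pt_lim f x l1 -> l1 = l2 -> derivable_pt_lim f x l2.
Proof. intros H ->; exact H. Qed.

Lemma dpl_lin (a b x : R) : derivable_pt_lim (fun t => a + t * b) x b.
Proof.
  eapply dpl_val.
  apply dpl_plus'; [apply dpl_const'|]. apply dpl_mult'; [apply derivable_pt_lim_id|apply dpl_const'].
  cbv beta; ring.
Qed.

Definition vshift {I : Type} (th : I -> R) (t : R) (u : I -> R) : I -> R :=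
  fun r => th r + t * u r.

Definition vlin {I : Type} (a : R) (u : I -> R) (b : R) (w : I -> R) : I -> R :=
  fun r => a * u r + b * w r.

Definition Sm2 {I : Type} (F : (I -> R) -> R) (D1 : (I -> R) -> (I -> R) -> R)
  (D2 : (I -> R) -> (I -> R) -> (I -> R) -> R) : Prop :=
  (forall th u, derivable_pt_lim (fun t => F (vshift th t u)) 0 (D1 th u)) /\
  (forall th u w, derivable_pt_lim (fun t => D1 (vshift th t w) u) 0 (D2 th u w)) /\
  (forall th u w a b, D1 th (vlin a u b w) = a * D1 th u + b * D1 th w) /\
  (forall th u w v a b, D2 th (vlin a u b w) v = a * D2 th u v + b * D2 th w v) /\
  (forall th u w, D2 th u w = D2 th w u).

Definition SM {I : Type} (F : (I -> R) -> R) : Prop := exists D1 D2, Sm2 F D1 D2.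

Lemma vshift0 {I} (th : I -> R) u : vshift th 0 u = th.
Proof. apply functional_extensionality; intro r; unfold vshift; ring. Qed.

Lemma vshift_add {I} (th : I -> R) t s u : vshift (vshift th t u) s u = vshift th (t + s) u.
Proof. apply functional_extensionality; intro r; unfold vshift; ring. Qed.

Lemma SM_const {I} (c : R) : SM (fun _ : I -> R => c).
Proof.
  exists (fun _ _ => 0), (fun _ _ _ => 0). split; [|split; [|split; [|split]]]; intros.
  - apply dpl_const'.
  - apply dpl_const'.
  - ring.
  - ring.
  - reflexivity.
Qed.

Lemma SM_coord {I} (r : I) : SM (fun th : I -> R => th r).
Proof.
  exists (fun _ u => u r), (fun _ _ _ => 0). split; [|split; [|split; [|split]]]; intros.
  - unfold vshift. apply dpl_lin.
  - apply dpl_const'.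
  - unfold vlin; ring.
  - ring.
  - reflexivity.
Qed.

Lemma SM_plus {I} (F G : (I -> R) -> R) : SM F -> SM G -> SM (fun th => F th + G th).
Proof.
  intros [D1 [D2 [H1 [H2 [H3 [H4 H5]]]]]] [E1 [E2 [K1 [K2 [K3 [K4 K5]]]]]].
  exists (fun th u => D1 th u + E1 th u), (fun th u w => D2 th u w + E2 th u w).
  split; [|split; [|split; [|split]]]; intros.
  - apply dpl_plus'; auto.
  - apply dpl_plus'; auto.
  - rewrite H3, K3; ring.
  - rewrite H4, K4; ring.
  - rewrite H5, K5; ring.
Qed.

Lemma SM_mult {I} (F G : (I -> R) -> R) : SM F -> SM G -> SM (fun th => F th * G th).
Proof.
  intros [D1 [D2 [H1 [H2 [H3 [H4 H5]]]]]] [E1 [E2 [K1 [K2 [K3 [K4 K5]]]]]].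
  exists (fun th u => F th * E1 th u + G th * D1 th u),
         (fun th u w => D1 th w * E1 th u + F th * E2 th u w + E1 th w * D1 th u + G th * D2 th u w).
  split; [|split; [|split; [|split]]]; intros.
  - eapply dpl_val; [apply dpl_mult'; [apply H1|apply K1]|]. cbv beta. rewrite vshift0. ring.
  - eapply dpl_val; [apply dpl_plus'; apply dpl_mult'; [apply H1|apply K2|apply K1|apply H2]|].
    cbv beta. rewrite !vshift0. ring.
  - rewrite H3, K3; ring.
  - rewrite H4, K4, K3, H3; ring.
  - rewrite H5, K5; ring.
Qed.

Lemma SM_comp {I} (g g1 g2 : R -> R) (F : (I -> R) -> R) :
  (forall x, derivable_pt_lim g x (g1 x)) -> (forall x, derivable_pt_lim g1 x (g2 x)) ->
  SM F -> SM (fun th => g (F th)).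
Proof.
  intros Hg Hg1 [D1 [D2 [H1 [H2 [H3 [H4 H5]]]]]].
  exists (fun th u => g1 (F th) * D1 th u),
         (fun th u w => g2 (F th) * D1 th w * D1 th u + g1 (F th) * D2 th u w).
  split; [|split; [|split; [|split]]]; intros.
  - eapply dpl_val; [apply (dpl_comp' (fun t => F (vshift th t u)) g); [apply H1|apply Hg]|].
    rewrite vshift0. ring.
  - eapply dpl_val; [apply dpl_mult'; [apply (dpl_comp' (fun t => F (vshift th t w)) g1); [apply H1|apply Hg1]|apply H2]|].
    cbv beta. rewrite !vshift0. ring.
  - rewrite H3; ring.
  - rewrite H4, H3; ring.
  - rewrite H5; ring.
Qed.

Lemma SM_rsum {I} (m : nat) (F : nat -> (I -> R) -> R) :
  (forall i, (i < m)%nat -> SM (F i)) -> SM (fun th => rsum m (fun i => F i th)).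
Proof.
  induction m; intros H; simpl.
  - apply SM_const.
  - apply SM_plus; [apply IHm; intros; apply H; lia| apply H; lia].
Qed.

Lemma Sm2_line {I} (F : (I -> R) -> R) D1 D2 : Sm2 F D1 D2 ->
  forall th u t0, derivable_pt_lim (fun t => F (vshift th t u)) t0 (D1 (vshift th t0 u) u).
Proof.
  intros [H1 _] th u t0. apply dpl_shift.
  eapply dpl_ext; [|apply (H1 (vshift th t0 u) u)].
  intros t; cbv beta. rewrite vshift_add. reflexivity.
Qed.

Lemma Sm2_line2 {I} (F : (I -> R) -> R) D1 D2 : Sm2 F D1 D2 ->
  forall th u w t0, derivable_pt_lim (fun t => D1 (vshift th t w) u) t0 (D2 (vshift th t0 w) u w).
Proof.
  intros [_ [H2 _]] th u w t0. apply dpl_shift.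
  eapply dpl_ext; [|apply (H2 (vshift th t0 w) u w)].
  intros t; cbv beta. rewrite vshift_add. reflexivity.
Qed.

Lemma quot_sign (a s : R) : s <> 0 -> a / s < 0 -> (0 < s -> a < 0) /\ (s < 0 -> 0 < a).
Proof.
  intros Hs Hq. assert (E : a = (a / s) * s) by (field; auto).
  split; intros Hs'; rewrite E; nra.
Qed.

Lemma deriv_zero_at_min (h : R -> R) d eps : 0 < eps ->
  (forall t, Rabs t < eps -> h 0 <= h t) -> derivable_pt_lim h 0 d -> d = 0.
Proof.
  intros He Hm Hd. destruct (Rtotal_order d 0) as [Hlt|[Heq|Hgt]]; auto; exfalso.
  - assert (Hp : 0 < - d / 2) by lra. destruct (Hd _ Hp) as [dl Hdl].
    assert (Hm0 : 0 < Rmin dl eps) by (apply Rmin_glb_lt; [exact (cond_pos dl)|lra]).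
    set (s := Rmin dl eps / 2).
    assert (Hs : 0 < s) by (unfold s; lra).
    assert (Hs3 : Rabs s < dl) by (rewrite Rabs_right by lra; pose proof (Rmin_l dl eps); unfold s; lra).
    assert (Hs4 : Rabs s < eps) by (rewrite Rabs_right by lra; pose proof (Rmin_r dl eps); unfold s; lra).
    specialize (Hdl s ltac:(lra) Hs3). rewrite Rplus_0_l in Hdl.
    apply Rabs_def2 in Hdl. destruct Hdl as [Ha Hb].
    assert (Hq : (h s - h 0) / s < 0) by lra.
    destruct (quot_sign _ s ltac:(intro; lra) Hq) as [Hq1 _]. specialize (Hq1 Hs).
    specialize (Hm s Hs4). lra.
  - assert (Hp : 0 < d / 2) by lra. destruct (Hd _ Hp) as [dl Hdl].
    set (s := - (Rmin dl eps / 2)).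
    assert (Hm0 : 0 < Rmin dl eps) by (apply Rmin_glb_lt; [exact (cond_pos dl)|lra]).
    assert (Hs : s < 0) by (unfold s; lra).
    assert (Hs3 : Rabs s < dl) by (rewrite Rabs_left by lra; pose proof (Rmin_l dl eps); unfold s; lra).
    assert (Hs4 : Rabs s < eps) by (rewrite Rabs_left by lra; pose proof (Rmin_r dl eps); unfold s; lra).
    specialize (Hdl s ltac:(lra) Hs3). rewrite Rplus_0_l in Hdl.
    apply Rabs_def2 in Hdl. destruct Hdl as [Ha Hb].
    assert (Hq : - ((h s - h 0) / s) < 0) by lra.
    replace (- ((h s - h 0) / s)) with ((h 0 - h s) / s) in Hq by (field; lra).
    destruct (quot_sign _ s ltac:(intro; lra) Hq) as [_ Hq1]. specialize (Hq1 Hs).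
    specialize (Hm s Hs4). lra.
Qed.

Lemma second_test (h h1 : R -> R) q eps : 0 < eps ->
  (forall t, Rabs t < eps -> h 0 <= h t) -> (forall t, derivable_pt_lim h t (h1 t)) ->
  derivable_pt_lim h1 0 q -> 0 <= q.
Proof.
  intros He Hm Hd Hq. destruct (Rle_or_lt 0 q) as [|Hlt]; auto; exfalso.
  assert (H10 : h1 0 = 0) by (eapply deriv_zero_at_min; eauto).
  assert (Hp : 0 < - q / 2) by lra. destruct (Hq _ Hp) as [dl Hdl].
  assert (Hm0 : 0 < Rmin dl eps) by (apply Rmin_glb_lt; [exact (cond_pos dl)|lra]).
  set (s := Rmin dl eps / 2).
  assert (Hs : 0 < s) by (unfold s; lra).
  assert (Hs4 : Rabs s < eps) by (rewrite Rabs_right by lra; pose proof (Rmin_r dl eps); unfold s; lra).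
  destruct (MVT_cor2 h h1 0 s Hs (fun c _ => Hd c)) as [c [Hc1 Hc2]].
  assert (Hc3 : Rabs c < dl) by (rewrite Rabs_right by lra; pose proof (Rmin_l dl eps); unfold s in Hc2; lra).
  specialize (Hdl c ltac:(lra) Hc3). rewrite Rplus_0_l, H10, Rminus_0_r in Hdl.
  apply Rabs_def2 in Hdl. destruct Hdl as [Ha Hb].
  assert (Hq' : h1 c / c < 0) by lra.
  destruct (quot_sign _ c ltac:(intro; lra) Hq') as [Hq1 _]. specialize (Hq1 ltac:(lra)).
  specialize (Hm s Hs4).
  assert (h1 c * (s - 0) < 0) by nra.
  lra.
Qed.

Section Q.
Context {I : Type} (F : (I -> R) -> R) (D1 : (I -> R) -> (I -> R) -> R)
  (D2 : (I -> R) -> (I -> R) -> (I -> R) -> R) (HS : Sm2 F D1 D2).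

Lemma psd_line th u : (exists eps, 0 < eps /\ forall t, Rabs t < eps -> F th <= F (vshift th t u)) ->
  0 <= D2 th u u.
Proof.
  intros [eps [He Hm]].
  apply (second_test (fun t => F (vshift th t u)) (fun t => D1 (vshift th t u) u) _ eps He).
  - intros t Ht. rewrite vshift0. apply Hm; auto.
  - intros t. apply (Sm2_line _ _ _ HS).
  - destruct HS as [_ [H2 _]]. apply H2.
Qed.

Lemma crit_line th u : (exists eps, 0 < eps /\ forall t, Rabs t < eps -> F th <= F (vshift th t u)) ->
  D1 th u = 0.
Proof.
  intros [eps [He Hm]].
  apply (deriv_zero_at_min (fun t => F (vshift th t u)) _ eps He).
  - intros t Ht. rewrite vshift0. apply Hm; auto.
  - destruct HS as [H1 _]. apply H1.
Qed.

Lemma q_zero th w : (forall t, F (vshift th t w) = F th) -> D2 th w w = 0.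
Proof.
  intros Hc.
  assert (Hz : forall t, D1 (vshift th t w) w = 0).
  { intros t. eapply uniqueness_limite; [apply (Sm2_line _ _ _ HS)|].
    eapply dpl_ext; [|apply (dpl_const' (F th))]. intros; cbv beta; rewrite Hc; reflexivity. }
  destruct HS as [_ [H2 _]]. eapply uniqueness_limite; [apply (H2 th w w)|].
  eapply dpl_ext; [|apply (dpl_const' 0)]. intros; cbv beta; rewrite Hz; reflexivity.
Qed.

Lemma cross_zero th w e : (forall u, 0 <= D2 th u u) -> D2 th w w = 0 -> D2 th e w = 0.
Proof.
  intros Hp Hw. destruct HS as [_ [_ [_ [H4 H5]]]].
  assert (Hexp : forall s, D2 th (vlin 1 w s e) (vlin 1 w s e) = 2 * s * D2 th e w + s * s * D2 th e e).
  { intros s. rewrite H4. rewrite (H5 th w), (H5 th e), !H4. rewrite Hw, (H5 th w e). ring. }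
  set (b := D2 th e w). set (a := D2 th e e).
  assert (Ha : 0 <= a) by apply Hp.
  pose proof (Hp (vlin 1 w (- b / (a + 1)) e)) as Hq. rewrite Hexp in Hq. fold b a in Hq.
  assert (Hq' : 0 <= - (b * b) / (a + 1) * (2 - a / (a + 1))).
  { replace (- (b * b) / (a + 1) * (2 - a / (a + 1))) with
      (2 * (- b / (a + 1)) * b + - b / (a + 1) * (- b / (a + 1)) * a) by (field; lra). exact Hq. }
  assert (Hk : 0 < 2 - a / (a + 1)).
  { assert (a / (a + 1) < 1). { apply (Rmult_lt_reg_r (a + 1)); [lra|]. field_simplify; lra. } lra. }
  assert (Hbb : 0 <= - (b * b) / (a + 1)).
  { destruct (Rle_or_lt 0 (- (b * b) / (a + 1))); auto. nra. }
  assert (0 <= - (b * b)) by (unfold Rdiv in Hbb; assert (0 < / (a + 1)) by (apply Rinv_0_lt_compat; lra); nra).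
  nra.
Qed.
End Q.

Lemma rsum_ext m f g : (forall a, (a < m)%nat -> f a = g a) -> rsum m f = rsum m g.
Proof. induction m; intros H; simpl; auto. rewrite IHm by (intros; apply H; lia). rewrite H by lia. reflexivity. Qed.

Lemma rsum_plus m f g : rsum m (fun a => f a + g a) = rsum m f + rsum m g.
Proof. induction m; simpl; [ring|rewrite IHm; ring]. Qed.

Lemma rsum_scal m c f : rsum m (fun a => c * f a) = c * rsum m f.
Proof. induction m; simpl; [ring|rewrite IHm; ring]. Qed.

Lemma rsum_zero m : rsum m (fun _ => 0) = 0.
Proof. induction m; simpl; [ring|rewrite IHm; ring]. Qed.

Lemma rsum_point m j f g : (j < m)%nat -> (forall a, (a < m)%nat -> a <> j -> f a = g a) ->
  rsum m g = rsum m f - f j + g j.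
Proof.
  induction m; intros Hj H; [lia|]. simpl.
  destruct (Nat.eq_dec j m).
  - subst. rewrite (rsum_ext m g f) by (intros; symmetry; apply H; lia). ring.
  - rewrite IHm by (auto; lia). rewrite (H m) by lia. ring.
Qed.

Lemma rsum_le m f g : (forall a, (a < m)%nat -> f a <= g a) -> rsum m f <= rsum m g.
Proof. induction m; intros H; simpl; [lra|]. pose proof (H m ltac:(lia)). pose proof (IHm ltac:(intros; apply H; lia)). lra. Qed.

Lemma rsum_single m j c : (j < m)%nat -> rsum m (fun a => if Nat.eq_dec a j then c else 0) = c.
Proof.
  intros Hj. rewrite (rsum_point m j (fun _ => 0)); auto.
  - rewrite rsum_zero. destruct (Nat.eq_dec j j); [ring|congruence].
  - intros a _ Ha. destruct (Nat.eq_dec a j); congruence.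
Qed.

Lemma lsum_app {A} (F : A -> R) l1 l2 : lsum F (l1 ++ l2) = lsum F l1 + lsum F l2.
Proof. induction l1; simpl; [ring|]. unfold lsum in *; simpl. rewrite IHl1. ring. Qed.

Lemma lsum_perm {A} (F : A -> R) l1 l2 : Permutation l1 l2 -> lsum F l1 = lsum F l2.
Proof.
  induction 1; unfold lsum in *; simpl; try ring.
  - rewrite IHPermutation; ring.
  - congruence.
Qed.

Lemma lsum_seq (F : nat -> R) m : lsum F (seq 0 m) = rsum m F.
Proof.
  induction m; [reflexivity|]. rewrite seq_S, lsum_app. simpl. rewrite IHm.
  unfold lsum; simpl. ring.
Qed.

Lemma lsum_ext {A} (F G : A -> R) l : (forall a, In a l -> F a = G a) -> lsum F l = lsum G l.
Proof. induction l; intros H; unfold lsum in *; simpl; auto. rewrite H by (left; auto). rewrite IHl; auto. intros; apply H; right; auto. Qed.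

Section Net.
Variable sigma l : R -> R.
Variable n : nat -> nat.

Definition pre (th : params) (m : nat) (x : nat -> R) (j : nat) : R :=
  rsum (n (m - 1)) (fun a => th (IW m a j) * fk sigma n th (m - 1) x a) + th (IB m j).

Lemma fk_pre th m x j : (1 <= m)%nat -> fk sigma n th m x j = sigma (pre th m x j).
Proof. intros Hm. destruct m; [lia|]. simpl. unfold pre. replace (S m - 1)%nat with m by lia. reflexivity. Qed.

Fixpoint fz (th : params) (m r : nat) (z : nat -> R) : nat -> R :=
  match r with
  | O => fun j => sigma (z j)
  | S r' => fun j => sigma (rsum (n (m + r')) (fun a => th (IW (S (m + r')) a j) * fz th m r' z a)
                             + th (IB (S (m + r')) j))
  end.

Definition up (th : params) (m r : nat) (z : nat -> R) (y : nat -> R) : R :=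
  rsum (n (m + r)) (fun j => l (fz th m r z j - y j)).

Lemma fk_fz th m r x j : (1 <= m)%nat -> fk sigma n th (m + r) x j = fz th m r (pre th m x) j.
Proof.
  intros Hm. revert j. induction r; intros j.
  - rewrite Nat.add_0_r. simpl. apply fk_pre; auto.
  - rewrite Nat.add_succ_r. simpl. f_equal. f_equal. apply rsum_ext. intros a _. rewrite IHr. reflexivity.
Qed.

Lemma Phi_up L' N X Y th m r : (1 <= m)%nat -> L' = (m + r)%nat ->
  Phi sigma l n L' N X Y th = rsum N (fun i => up th m r (pre th m (X i)) (Y i)).
Proof.
  intros Hm ->. unfold Phi, up. apply rsum_ext. intros i _. apply rsum_ext. intros j _.
  rewrite fk_fz; auto.
Qed.

Lemma fk_local th th' m x : (forall m' i j, (m' <= m)%nat -> th (IW m' i j) = th' (IW m' i j) /\ th (IB m' j) = th' (IB m' j)) ->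
  forall j, fk sigma n th m x j = fk sigma n th' m x j.
Proof.
  induction m; intros H j; simpl; auto.
  destruct (H (S m) 0%nat j ltac:(lia)) as [_ Hb]. rewrite Hb. f_equal. f_equal.
  apply rsum_ext. intros a _. destruct (H (S m) a j ltac:(lia)) as [Hw _]. rewrite Hw.
  rewrite IHm; [reflexivity|]. intros; apply H; lia.
Qed.

Lemma fz_local th th' m r z : (forall m' i j, (m < m')%nat -> th (IW m' i j) = th' (IW m' i j) /\ th (IB m' j) = th' (IB m' j)) ->
  forall j, fz th m r z j = fz th' m r z j.
Proof.
  intros H. induction r; intros j; simpl; auto.
  destruct (H (S (m + r)) 0%nat j ltac:(lia)) as [_ Hb]. rewrite Hb. f_equal. f_equal.
  apply rsum_ext. intros a _. destruct (H (S (m + r)) a j ltac:(lia)) as [Hw _]. rewrite Hw, IHr. reflexivity.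
Qed.

Lemma fz_zlocal th m r z z' : (forall a, (a < n m)%nat -> z a = z' a) ->
  forall j, (j < n (m + r))%nat -> fz th m r z j = fz th m r z' j.
Proof.
  intros H. induction r; intros j Hj; simpl.
  - rewrite Nat.add_0_r in Hj. rewrite H; auto.
  - f_equal. f_equal. apply rsum_ext. intros a Ha. rewrite IHr; auto.
Qed.

Lemma up_zlocal th m r z z' y : (forall a, (a < n m)%nat -> z a = z' a) -> up th m r z y = up th m r z' y.
Proof. intros H. unfold up. apply rsum_ext. intros j Hj. rewrite (fz_zlocal th m r z z'); auto. Qed.

Definition hmap (th : params) (m : nat) (z : nat -> R) : nat -> R :=
  fun j => rsum (n m) (fun a => th (IW (S m) a j) * sigma (z a)) + th (IB (S m) j).

Lemma fz_step th m r z j : fz th m (S r) z j = fz th (S m) r (hmap th m z) j.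
Proof.
  revert j. induction r; intros j.
  - simpl. unfold hmap. rewrite Nat.add_0_r. reflexivity.
  - change (fz th m (S (S r)) z j) with
      (sigma (rsum (n (m + S r)) (fun a => th (IW (S (m + S r)) a j) * fz th m (S r) z a) + th (IB (S (m + S r)) j))).
    change (fz th (S m) (S r) (hmap th m z) j) with
      (sigma (rsum (n (S m + r)) (fun a => th (IW (S (S m + r)) a j) * fz th (S m) r (hmap th m z) a) + th (IB (S (S m + r)) j))).
    rewrite Nat.add_succ_r. simpl (S m + r)%nat. f_equal. f_equal. apply rsum_ext. intros a _. rewrite IHr. reflexivity.
Qed.

Lemma up_step th m r z y : up th m (S r) z y = up th (S m) r (hmap th m z) y.
Proof.
  unfold up. rewrite Nat.add_succ_r. apply rsum_ext. intros j _. rewrite fz_step. reflexivity.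
Qed.

Lemma pre_hmap th m x : (1 <= m)%nat -> pre th (S m) x = hmap th m (pre th m x).
Proof.
  intros Hm. apply functional_extensionality. intros j. unfold pre, hmap. simpl. rewrite Nat.sub_0_r.
  f_equal. apply rsum_ext. intros a _. rewrite fk_pre; auto.
Qed.

End Net.

Section SMnet.
Variables sigma sigma1 sigma2 l l1 l2 : R -> R.
Hypothesis Hs1 : forall x, derivable_pt_lim sigma x (sigma1 x).
Hypothesis Hs2 : forall x, derivable_pt_lim sigma1 x (sigma2 x).
Hypothesis Hl1 : forall x, derivable_pt_lim l x (l1 x).
Hypothesis Hl2 : forall x, derivable_pt_lim l1 x (l2 x).
Variable n : nat -> nat.

Lemma SM_fk m x : forall j, SM (fun th : params => fk sigma n th m x j).
Proof.
  induction m; intros j; simpl.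
  - apply SM_const.
  - apply (SM_comp sigma sigma1 sigma2); auto.
    apply SM_plus; [|apply SM_coord].
    apply SM_rsum. intros i _. apply SM_mult; [apply SM_coord|apply IHm].
Qed.

Lemma SM_Phi L N X Y : SM (Phi sigma l n L N X Y).
Proof.
  unfold Phi. apply SM_rsum. intros i _. apply SM_rsum. intros j _.
  apply (SM_comp l l1 l2); auto. unfold Rminus. apply SM_plus; [apply SM_fk|apply SM_const].
Qed.

Lemma SM_fz th m r : forall j, SM (fun z : nat -> R => fz sigma n th m r z j).
Proof.
  induction r; intros j; simpl.
  - apply (SM_comp sigma sigma1 sigma2); auto. apply SM_coord.
  - apply (SM_comp sigma sigma1 sigma2); auto.
    apply SM_plus; [|apply SM_const].
    apply SM_rsum. intros i _. apply SM_mult; [apply SM_const|apply IHr].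
Qed.

Lemma SM_up th m r y : SM (fun z : nat -> R => up sigma l n th m r z y).
Proof.
  unfold up. apply SM_rsum. intros j _.
  apply (SM_comp l l1 l2); auto. unfold Rminus. apply SM_plus; [apply SM_fz|apply SM_const].
Qed.
End SMnet.

Section Lin.
Context {I : Type} (F : (I -> R) -> R) (D1 : (I -> R) -> (I -> R) -> R)
  (D2 : (I -> R) -> (I -> R) -> (I -> R) -> R) (HS : Sm2 F D1 D2).

Lemma D1_zero th : D1 th (fun _ => 0) = 0.
Proof.
  destruct HS as [_ [_ [H3 _]]].
  replace (fun _ : I => 0) with (vlin 0 (fun _ : I => 0) 0 (fun _ : I => 0)).
  - rewrite H3. ring.
  - apply functional_extensionality; intros; unfold vlin; ring.
Qed.

Lemma D1_scale th c u : D1 th (fun r => c * u r) = c * D1 th u.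
Proof.
  destruct HS as [_ [_ [H3 _]]].
  replace (fun r => c * u r) with (vlin c u 0 u).
  - rewrite H3. ring.
  - apply functional_extensionality; intros; unfold vlin; ring.
Qed.

Lemma D2_lin2 th u a x b y : D2 th u (vlin a x b y) = a * D2 th u x + b * D2 th u y.
Proof.
  destruct HS as [_ [_ [_ [H4 H5]]]]. rewrite H5, H4, (H5 th x), (H5 th y). ring.
Qed.

Lemma D2_zero2 th u : D2 th u (fun _ => 0) = 0.
Proof.
  replace (fun _ : I => 0) with (vlin 0 (fun _ : I => 0) 0 (fun _ : I => 0)).
  - rewrite D2_lin2. ring.
  - apply functional_extensionality; intros; unfold vlin; ring.
Qed.

Lemma D2_lsum {A : Type} th u (e : A -> I -> R) (v : A -> R) (ls : list A) :
  lsum (fun q => D2 th u (e q) * v q) ls = D2 th u (fun r => lsum (fun q => v q * e q r) ls).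
Proof.
  induction ls; unfold lsum in *; simpl.
  - rewrite D2_zero2. reflexivity.
  - rewrite IHls.
    replace (fun r => v a * e a r + fold_right (fun (a0 : A) (acc : R) => v a0 * e a0 r + acc) 0 ls)
      with (vlin (v a) (e a) 1 (fun r => fold_right (fun (a0 : A) (acc : R) => v a0 * e a0 r + acc) 0 ls)).
    + rewrite D2_lin2. ring.
    + apply functional_extensionality; intros; unfold vlin; ring.
Qed.
End Lin.

Lemma D1_rsum (F : (nat -> R) -> R) D1 D2 (HS : Sm2 F D1 D2) th m (c : nat -> R) (e : nat -> nat -> R) :
  D1 th (fun x => rsum m (fun j => c j * e j x)) = rsum m (fun j => c j * D1 th (e j)).
Proof.
  induction m; simpl.
  - apply (D1_zero _ _ _ HS).
  - rewrite <- IHm. destruct HS as [_ [_ [H3 _]]].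
    replace (fun x => rsum m (fun j => c j * e j x) + c m * e m x)
      with (vlin 1 (fun x => rsum m (fun j => c j * e j x)) (c m) (e m)).
    + rewrite H3. ring.
    + apply functional_extensionality; intros; unfold vlin; ring.
Qed.

Definition skip (a0 a : nat) : nat := if Nat.ltb a a0 then a else S a.

Lemma skip_ne a0 a : skip a0 a <> a0.
Proof. unfold skip. destruct (Nat.ltb_spec a a0); lia. Qed.

Lemma skip_lt a0 a m : (a < m)%nat -> (skip a0 a < S m)%nat.
Proof. unfold skip. destruct (Nat.ltb_spec a a0); lia. Qed.

Lemma rsum_skip (F : nat -> R) m a0 : (a0 <= m)%nat ->
  rsum (S m) F = F a0 + rsum m (fun a => F (skip a0 a)).
Proof.
  induction m; intros H.
  - assert (a0 = O) by lia. subst. simpl. ring.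
  - change (rsum (S (S m)) F) with (rsum (S m) F + F (S m)).
    destruct (Nat.eq_dec a0 (S m)).
    + subst. rewrite (rsum_ext (S m) (fun a => F (skip (S m) a)) F).
      * ring.
      * intros a Ha. unfold skip. destruct (Nat.ltb_spec a (S m)); [reflexivity|lia].
    + rewrite IHm by lia. change (rsum (S m) (fun a => F (skip a0 a))) with (rsum m (fun a => F (skip a0 a)) + F (skip a0 m)). assert (E : skip a0 m = S m) by (unfold skip; destruct (Nat.ltb_spec m a0); lia). rewrite E. ring.
Qed.

Lemma rsum_swap m N (f : nat -> nat -> R) :
  rsum m (fun a => rsum N (fun i => f i a)) = rsum N (fun i => rsum m (fun a => f i a)).
Proof.
  induction m; simpl.
  - rewrite rsum_zero. reflexivity.
  - rewrite IHm. rewrite <- rsum_plus. reflexivity.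
Qed.

Lemma dep_cols N : forall m (M : nat -> nat -> R), (N < m)%nat ->
  exists c, (exists a, (a < m)%nat /\ c a <> 0) /\
    forall i, (i < N)%nat -> rsum m (fun a => M i a * c a) = 0.
Proof.
  induction N; intros m M Hm.
  - exists (fun _ => 1). split; [exists O; split; [lia|lra]|]. intros; lia.
  - destruct (classic (exists a0, (a0 < m)%nat /\ M N a0 <> 0)) as [[a0 [Ha0 Hn]]|Hno].
    + destruct m as [|m']; [lia|].
      set (M2 := fun i a => M i (skip a0 a) - (M N (skip a0 a) / M N a0) * M i a0).
      destruct (IHN m' M2 ltac:(lia)) as [c2 [[a' [Ha' Hc2]] Hz]].
      set (S0 := rsum m' (fun a => M N (skip a0 a) * c2 a)).
      set (c := fun a => if Nat.eq_dec a a0 then - S0 / M N a0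
                         else c2 (if Nat.ltb a a0 then a else (a - 1)%nat)).
      assert (Hcs : forall a, c (skip a0 a) = c2 a).
      { intros a. unfold c. destruct (Nat.eq_dec (skip a0 a) a0) as [e|_]; [exfalso; apply (skip_ne a0 a); auto|].
        unfold skip. destruct (Nat.ltb_spec a a0).
        - destruct (Nat.ltb_spec a a0); [reflexivity|lia].
        - destruct (Nat.ltb_spec (S a) a0); [lia|]. f_equal. lia. }
      exists c. split.
      * exists (skip a0 a'). split; [apply skip_lt; auto|]. rewrite Hcs. auto.
      * intros i Hi.
        rewrite (rsum_skip _ m' a0) by lia.
        rewrite (rsum_ext m' _ (fun a => M i (skip a0 a) * c2 a)) by (intros; rewrite Hcs; reflexivity).
        assert (Hc0 : c a0 = - S0 / M N a0) by (unfold c; destruct (Nat.eq_dec a0 a0); congruence).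
        rewrite Hc0.
        destruct (Nat.eq_dec i N).
        -- subst i. fold S0. field. auto.
        -- assert (Hi2 : (i < N)%nat) by lia. specialize (Hz i Hi2). unfold M2 in Hz.
           rewrite (rsum_ext m' _ (fun a => M i (skip a0 a) * c2 a + (- (M i a0 / M N a0)) * (M N (skip a0 a) * c2 a))) in Hz
             by (intros; field; auto).
           rewrite rsum_plus, rsum_scal in Hz. fold S0 in Hz.
           assert (E : rsum m' (fun a => M i (skip a0 a) * c2 a) = (M i a0 / M N a0) * S0) by lra.
           rewrite E. field. auto.
    + destruct (IHN m M ltac:(lia)) as [c [Hc Hz]]. exists c. split; auto.
      intros i Hi. destruct (Nat.eq_dec i N).
      * subst. rewrite (rsum_ext m _ (fun _ => 0)); [apply rsum_zero|].
        intros a Ha. destruct (Req_dec (M N a) 0) as [E|E]; [rewrite E; ring|].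
        exfalso; apply Hno; eauto.
      * apply Hz; lia.
Qed.

Lemma orth_dep N m (M : nat -> nat -> R) (d : nat -> R) : (N <= m)%nat ->
  (exists i0, (i0 < N)%nat /\ d i0 <> 0) ->
  (forall a, (a < m)%nat -> rsum N (fun i => M i a * d i) = 0) ->
  exists c, (exists a, (a < m)%nat /\ c a <> 0) /\
    forall i, (i < N)%nat -> rsum m (fun a => M i a * c a) = 0.
Proof.
  intros Hm [i0 [Hi0 Hd]] Horth.
  destruct N as [|N']; [lia|].
  destruct (dep_cols N' m (fun i a => M (skip i0 i) a) ltac:(lia)) as [c [Hc Hz]].
  exists c. split; auto.
  assert (Hrow : forall i, (i < S N')%nat -> i <> i0 -> rsum m (fun a => M i a * c a) = 0).
  { intros i Hi Hne. set (i' := if Nat.ltb i i0 then i else (i - 1)%nat).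
    assert (Hi' : skip i0 i' = i).
    { unfold i', skip. destruct (Nat.ltb_spec i i0).
      - destruct (Nat.ltb_spec i i0); lia.
      - destruct (Nat.ltb_spec (i - 1) i0); lia. }
    assert (Hl : (i' < N')%nat) by (unfold i'; destruct (Nat.ltb_spec i i0); lia).
    specialize (Hz i' Hl). rewrite Hi' in Hz. exact Hz. }
  intros i Hi. destruct (Nat.eq_dec i i0); [|apply Hrow; auto]. subst i.
  assert (T : rsum m (fun a => c a * rsum (S N') (fun i => M i a * d i)) = 0).
  { rewrite (rsum_ext m _ (fun _ => 0)); [apply rsum_zero|]. intros a Ha. rewrite Horth; auto. ring. }
  rewrite (rsum_ext m _ (fun a => rsum (S N') (fun i => d i * (M i a * c a)))) in T
    by (intros; rewrite <- rsum_scal; apply rsum_ext; intros; ring).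
  rewrite rsum_swap in T.
  rewrite (rsum_ext (S N') _ (fun i => d i * rsum m (fun a => M i a * c a))) in T
    by (intros; apply rsum_scal).
  rewrite (rsum_point (S N') i0 (fun _ => 0)) in T; auto.
  - rewrite rsum_zero in T. assert (d i0 * rsum m (fun a => M i0 a * c a) = 0) by lra.
    apply Rmult_integral in H. destruct H; [contradiction|auto].
  - intros a Ha Hne. rewrite Hrow; auto. ring.
Qed.

Definition ev (p : pidx) : pidx -> R := fun q => if pidx_eq_dec q p then 1 else 0.
Definition unit (j : nat) : nat -> R := fun a => if Nat.eq_dec a j then 1 else 0.

Lemma dpl_rsum N (f : nat -> R -> R) (g : nat -> R) x :
  (forall i, (i < N)%nat -> derivable_pt_lim (f i) x (g i)) ->
  derivable_pt_lim (fun t => rsum N (fun i => f i t)) x (rsum N g).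
Proof.
  induction N; intros H; simpl.
  - apply dpl_const'.
  - apply dpl_plus'; [apply IHN; intros; apply H; lia|apply H; lia].
Qed.

Lemma dpl_comp2 (f g : R -> R) x y0 l1 l2 :
  derivable_pt_lim f x l1 -> f x = y0 -> derivable_pt_lim g y0 l2 ->
  derivable_pt_lim (fun t => g (f t)) x (l2 * l1).
Proof. intros H1 <- H2. apply dpl_comp'; auto. Qed.

Lemma SM_choice {I} (F : nat -> (I -> R) -> R) : (forall i, SM (F i)) ->
  exists D1 D2, forall i, Sm2 (F i) (D1 i) (D2 i).
Proof.
  intros H.
  set (P := fun i => constructive_indefinite_description _ (H i)).
  exists (fun i => proj1_sig (P i)).
  exists (fun i => proj1_sig (constructive_indefinite_description _ (proj2_sig (P i)))).
  intros i. exact (proj2_sig (constructive_indefinite_description _ (proj2_sig (P i)))).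
Qed.

Lemma line_at {I} (F : (I -> R) -> R) D1 D2 (HS : Sm2 F D1 D2) th u c :
  derivable_pt_lim (fun t => F (vshift th (t - c) u)) c (D1 th u).
Proof.
  apply dpl_shift. eapply dpl_ext; [|apply (proj1 HS th u)].
  intros h; cbv beta. f_equal. f_equal. ring.
Qed.

Lemma line2_at {I} (F : (I -> R) -> R) D1 D2 (HS : Sm2 F D1 D2) th u w c :
  derivable_pt_lim (fun t => D1 (vshift th (t - c) w) u) c (D2 th u w).
Proof.
  apply dpl_shift. eapply dpl_ext; [|apply (proj1 (proj2 HS) th u w)].
  intros h; cbv beta. f_equal. f_equal. ring.
Qed.

Lemma upd_vshift th p t : upd th p t = vshift th (t - th p) (ev p).
Proof.
  apply functional_extensionality. intros q. unfold upd, vshift, ev.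
  destruct (pidx_eq_dec q p); [subst; ring|ring].
Qed.

Lemma grad_eq ps F G D1 D2 : is_gradient ps F G -> Sm2 F D1 D2 ->
  forall th p, In p ps -> G p th = D1 th (ev p).
Proof.
  intros HG HS th p Hp. eapply uniqueness_limite; [apply (HG th p Hp)|].
  eapply dpl_ext; [|apply (line_at F D1 D2 HS th (ev p) (th p))].
  intros t; cbv beta. rewrite upd_vshift. reflexivity.
Qed.

Lemma hess_eq ps F G D1 D2 th H : is_gradient ps F G -> Sm2 F D1 D2 -> is_hessian_at ps G th H ->
  forall p q, In p ps -> In q ps -> H p q = D2 th (ev p) (ev q).
Proof.
  intros HG HS HH p q Hp Hq. eapply uniqueness_limite; [apply (HH p q Hp Hq)|].
  eapply dpl_ext; [|apply (line2_at F D1 D2 HS th (ev p) (ev q) (th q))].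
  intros t; cbv beta. rewrite (grad_eq ps F G D1 D2 HG HS _ p Hp). rewrite upd_vshift. reflexivity.
Qed.

Lemma lsum_nonneg_le {A} (f : A -> R) ls a : (forall x, 0 <= f x) -> In a ls -> f a <= lsum f ls.
Proof.
  intros Hp. induction ls as [|b ls IH]; simpl; [tauto|]. intros [->|Hi]; unfold lsum in *; simpl.
  - assert (0 <= fold_right (fun a0 acc => f a0 + acc) 0 ls).
    { clear IH. induction ls as [|c ls' IH']; simpl; [lra|]. pose proof (Hp c). lra. }
    lra.
  - pose proof (IH Hi). pose proof (Hp b). lra.
Qed.

Lemma lmin_line ps F th : local_min ps F th ->
  forall u, exists eps, 0 < eps /\ forall t, Rabs t < eps -> F th <= F (vshift th t u).
Proof.
  intros [eps [He Hm]] u. set (S := lsum (fun p => Rabs (u p)) ps).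
  assert (HS : 0 <= S).
  { unfold S. clear. induction ps; unfold lsum in *; simpl; [lra|]. pose proof (Rabs_pos (u a)). lra. }
  exists (eps / (S + 1)). split; [apply Rdiv_lt_0_compat; lra|].
  intros t Ht. apply Hm. intros p Hp. unfold vshift.
  replace (th p + t * u p - th p) with (t * u p) by ring. rewrite Rabs_mult.
  assert (Hu : Rabs (u p) <= S) by (apply (lsum_nonneg_le (fun p => Rabs (u p))); auto; intros; apply Rabs_pos).
  assert (Ht' : Rabs t * (S + 1) < eps).
  { apply (Rmult_lt_compat_r (S + 1)) in Ht; [|lra]. unfold Rdiv in Ht.
    rewrite Rmult_assoc, Rinv_l, Rmult_1_r in Ht; lra. }
  pose proof (Rabs_pos t). pose proof (Rabs_pos (u p)). nra.
Qed.

Lemma lsum_ev (v : pidx -> R) ps r :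
  lsum (fun q => v q * ev q r) ps = v r * INR (count_occ pidx_eq_dec ps r).
Proof.
  induction ps; unfold lsum in *; simpl; [ring|]. rewrite IHps. unfold ev.
  destruct (pidx_eq_dec r a); destruct (pidx_eq_dec a r); subst; try congruence.
  - rewrite S_INR. ring.
  - ring.
Qed.

Lemma in_pidxs_W n L K a j : (1 <= K <= L)%nat -> (a < n (K - 1))%nat -> (j < n K)%nat ->
  In (IW K a j) (pidxs n L).
Proof.
  intros HK Ha Hj. unfold pidxs. apply in_flat_map. exists K. split; [apply in_seq; lia|].
  apply in_app_iff. left. apply in_flat_map. exists a. split; [apply in_seq; lia|].
  apply in_map_iff. exists j. split; [reflexivity|apply in_seq; lia].
Qed.

Lemma in_pidxs_B n L K j : (1 <= K <= L)%nat -> (j < n K)%nat -> In (IB K j) (pidxs n L).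
Proof.
  intros HK Hj. unfold pidxs. apply in_flat_map. exists K. split; [apply in_seq; lia|].
  apply in_app_iff. right. apply in_map_iff. exists j. split; [reflexivity|apply in_seq; lia].
Qed.

Lemma dpl_addc (a x : R) : derivable_pt_lim (fun t => a + t) x 1.
Proof. eapply dpl_val; [apply dpl_plus'; [apply dpl_const'|apply derivable_pt_lim_id]|]. ring. Qed.

Section Main.
Variables sigma sigma1 sigma2 l l1 l2 : R -> R.
Hypothesis Hs1 : forall x, derivable_pt_lim sigma x (sigma1 x).
Hypothesis Hs2 : forall x, derivable_pt_lim sigma1 x (sigma2 x).
Hypothesis Hl1 : forall x, derivable_pt_lim l x (l1 x).
Hypothesis Hl2 : forall x, derivable_pt_lim l1 x (l2 x).
Hypothesis Hpos : forall x, 0 < sigma1 x.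
Variable n : nat -> nat.

Definition dirof (th : params) (K : nat) (u : pidx -> R) (x : nat -> R) : nat -> R :=
  fun j' => rsum (n (K - 1)) (fun a => u (IW K a j') * fk sigma n th (K - 1) x a) + u (IB K j').

Definition supp_layer (u : pidx -> R) (K : nat) : Prop :=
  forall m' a j, m' <> K -> u (IW m' a j) = 0 /\ u (IB m' j) = 0.

Lemma Phi_dir K r N X Y th u : (1 <= K)%nat -> supp_layer u K -> forall t,
  Phi sigma l n (K + r) N X Y (vshift th t u) =
  rsum N (fun i => up sigma l n th K r (vshift (pre sigma n th K (X i)) t (dirof th K u (X i))) (Y i)).
Proof.
  intros HK Hu t. rewrite (Phi_up sigma l n _ N X Y _ K r HK eq_refl).
  apply rsum_ext. intros i _.
  assert (E1 : pre sigma n (vshift th t u) K (X i) = vshift (pre sigma n th K (X i)) t (dirof th K u (X i))).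
  { apply functional_extensionality. intros j'. unfold pre, vshift, dirof.
    rewrite (rsum_ext _ _ (fun a => th (IW K a j') * fk sigma n th (K - 1) (X i) a + t * (u (IW K a j') * fk sigma n th (K - 1) (X i) a))).
    - rewrite rsum_plus, rsum_scal. ring.
    - intros a _. rewrite (fk_local sigma n (vshift th t u) th).
      + ring.
      + intros m' i0 j0 Hm'. unfold vshift. destruct (Hu m' i0 j0 ltac:(lia)) as [A B]. rewrite A, B. split; ring. }
  rewrite E1. unfold up. apply rsum_ext. intros j _. rewrite (fz_local sigma n (vshift th t u) th); auto.
  intros m' i0 j0 Hm'. unfold vshift. destruct (Hu m' i0 j0 ltac:(lia)) as [A B]. rewrite A, B. split; ring.
Qed.

Lemma hmap_line th m z j t : (j < n m)%nat ->
  hmap sigma n th m (vshift z t (unit j)) =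
  vshift (hmap sigma n th m z) (sigma (z j + t) - sigma (z j)) (fun b => th (IW (S m) j b)).
Proof.
  intros Hj. apply functional_extensionality. intros b. unfold hmap, vshift.
  rewrite (rsum_point (n m) j (fun a => th (IW (S m) a b) * sigma (z a))); auto.
  - unfold unit. destruct (Nat.eq_dec j j); [|congruence]. rewrite Rmult_1_r. ring.
  - intros a Ha Hne. unfold unit. destruct (Nat.eq_dec a j); [congruence|]. rewrite Rmult_0_r, Rplus_0_r. reflexivity.
Qed.

Lemma row_rsum th m j : forall b, (b < n (S m))%nat ->
  th (IW (S m) j b) = rsum (n (S m)) (fun b' => th (IW (S m) j b') * unit b' b).
Proof.
  intros b Hb. rewrite (rsum_ext _ _ (fun b' => if Nat.eq_dec b' b then th (IW (S m) j b) else 0)).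
  - rewrite rsum_single; auto.
  - intros b' _. unfold unit. destruct (Nat.eq_dec b' b), (Nat.eq_dec b b'); subst; try congruence; ring.
Qed.

Lemma lin_indep_rsum A p q c : has_rank A p q q -> (forall i, (i < p)%nat -> rsum q (fun j => c j * A i j) = 0) ->
  forall j, (j < q)%nat -> c j = 0.
Proof.
  intros [[cs [Hnd [Hr [Hlen Hli]]]] _] Hz j Hj.
  assert (Hperm : Permutation cs (seq 0 q)).
  { apply NoDup_Permutation_bis; auto. rewrite length_seq; lia.
    intros x Hx. apply in_seq. specialize (Hr x Hx). lia. }
  apply Hli.
  - intros i Hi. rewrite (lsum_perm _ _ _ Hperm), lsum_seq. apply Hz; auto.
  - apply (Permutation_in _ (Permutation_sym Hperm)). apply in_seq. lia.
Qed.

Lemma propagate : forall r' m th x (y : nat -> R), (1 <= m)%nat ->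
  (forall l0, (S m <= l0 <= m + r')%nat -> has_rank (Wmat th l0) (n (l0 - 1)) (n l0) (n l0)) ->
  (forall j, (j < n m)%nat -> derivable_pt_lim (fun t => up sigma l n th m r' (vshift (pre sigma n th m x) t (unit j)) y) 0 0) ->
  forall j, (j < n (m + r'))%nat -> l1 (fk sigma n th (m + r') x j - y j) = 0.
Proof.
  induction r'; intros m th x y Hm Hrank Hd j Hj.
  - rewrite Nat.add_0_r in *. specialize (Hd j Hj). rewrite fk_pre by auto.
    set (Z := pre sigma n th m x) in *.
    unfold up in Hd. rewrite Nat.add_0_r in Hd. simpl fz in Hd.
    assert (Hd2 : derivable_pt_lim (fun t => rsum (n m) (fun j' => l (sigma (Z j') - y j')) - l (sigma (Z j) - y j) + l (sigma (Z j + t) - y j)) 0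
                   (l1 (sigma (Z j) - y j) * sigma1 (Z j))).
    { eapply dpl_val.
      - apply dpl_plus'; [apply dpl_const'|].
        apply (dpl_comp2 (fun t => sigma (Z j + t) - y j) l 0 (sigma (Z j) - y j)).
        + eapply dpl_val; [apply dpl_plus'; [|apply dpl_const']|].
          * apply (dpl_comp2 (fun t => Z j + t) sigma 0 (Z j)); [apply dpl_addc| ring | apply Hs1].
          * reflexivity.
        + cbv beta. rewrite Rplus_0_r. reflexivity.
        + apply Hl1.
      - ring. }
    assert (E : forall t, rsum (n m) (fun j0 => l (sigma (vshift Z t (unit j) j0) - y j0)) =
        rsum (n m) (fun j' => l (sigma (Z j') - y j')) - l (sigma (Z j) - y j) + l (sigma (Z j + t) - y j)).
    { intros t. rewrite (rsum_point (n m) j (fun j' => l (sigma (Z j') - y j'))); auto.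
      - unfold vshift, unit. destruct (Nat.eq_dec j j); [|congruence]. rewrite Rmult_1_r. reflexivity.
      - intros a Ha Hne. unfold vshift, unit. destruct (Nat.eq_dec a j); [congruence|]. rewrite Rmult_0_r, Rplus_0_r. reflexivity. }
    assert (Hd3 : derivable_pt_lim (fun t => rsum (n m) (fun j0 => l (sigma (vshift Z t (unit j) j0) - y j0))) 0
                   (l1 (sigma (Z j) - y j) * sigma1 (Z j))) by (eapply dpl_ext; [|exact Hd2]; intros; symmetry; apply E).
    pose proof (uniqueness_limite _ _ _ _ Hd Hd3) as U.
    pose proof (Hpos (Z j)). symmetry in U. apply Rmult_integral in U. destruct U; [auto|lra].
  - rewrite Nat.add_succ_r in Hj. rewrite Nat.add_succ_r. change (S (m + r')) with (S m + r')%nat in *.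
    apply (IHr' (S m) th x y); auto.
    + intros l0 Hl0. apply Hrank. lia.
    + set (Z := pre sigma n th m x).
      set (hZ := hmap sigma n th m Z).
      rewrite (pre_hmap sigma n th m x Hm). fold Z. fold hZ.
      destruct (SM_up sigma sigma1 sigma2 l l1 l2 Hs1 Hs2 Hl1 Hl2 n th (S m) r' y) as [D1 [D2 HS]].
      assert (Hrow : forall j0, (j0 < n m)%nat -> D1 hZ (fun b => th (IW (S m) j0 b)) = 0).
      { intros j0 Hj0. specialize (Hd j0 Hj0).
        assert (Hc : derivable_pt_lim (fun t => up sigma l n th (S m) r' (vshift hZ (sigma (Z j0 + t) - sigma (Z j0)) (fun b => th (IW (S m) j0 b))) y) 0
                       (D1 hZ (fun b => th (IW (S m) j0 b)) * sigma1 (Z j0))).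
        { apply (dpl_comp2 (fun t => sigma (Z j0 + t) - sigma (Z j0)) (fun s => up sigma l n th (S m) r' (vshift hZ s (fun b => th (IW (S m) j0 b))) y) 0 0).
          - eapply dpl_val; [apply dpl_plus'; [|apply dpl_const']|].
            + apply (dpl_comp2 (fun t => Z j0 + t) sigma 0 (Z j0)); [apply dpl_addc| ring | apply Hs1].
            + cbv beta; ring.
          - rewrite Rplus_0_r. ring.
          - apply (proj1 HS). }
        assert (Hc2 : derivable_pt_lim (fun t => up sigma l n th m (S r') (vshift Z t (unit j0)) y) 0
                       (D1 hZ (fun b => th (IW (S m) j0 b)) * sigma1 (Z j0))).
        { eapply dpl_ext; [|exact Hc]. intros t. cbv beta. rewrite up_step. rewrite hmap_line; auto. }
        pose proof (uniqueness_limite _ _ _ _ Hd Hc2) as U.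
        pose proof (Hpos (Z j0)). symmetry in U. apply Rmult_integral in U. destruct U; [auto|lra]. }
      assert (Hrow2 : forall j0, (j0 < n m)%nat -> rsum (n (S m)) (fun b => th (IW (S m) j0 b) * D1 hZ (unit b)) = 0).
      { intros j0 Hj0. rewrite <- (D1_rsum _ _ _ HS). rewrite <- (Hrow j0 Hj0).
        eapply uniqueness_limite; [apply (proj1 HS)|].
        eapply dpl_ext; [|apply (proj1 HS)]. intros t. cbv beta. apply up_zlocal.
        intros a Ha. unfold vshift. rewrite (row_rsum th m j0 a Ha). reflexivity. }
      intros j0 Hj0.
      assert (Hz : D1 hZ (unit j0) = 0).
      { apply (lin_indep_rsum (Wmat th (S m)) (n m) (n (S m)) (fun b => D1 hZ (unit b))); auto.
        - replace (n m) with (n (S m - 1)) by (f_equal; lia). apply Hrank. lia.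
        - intros i Hi. rewrite <- (Hrow2 i Hi). apply rsum_ext. intros b _. unfold Wmat. ring. }
      eapply dpl_val; [apply (proj1 HS)|exact Hz].
Qed.
End Main.

Lemma core (sigma sigma1 sigma2 l l1 l2 : R -> R)
  (Hs1 : forall x, derivable_pt_lim sigma x (sigma1 x))
  (Hs2 : forall x, derivable_pt_lim sigma1 x (sigma2 x))
  (Hl1 : forall x, derivable_pt_lim l x (l1 x))
  (Hl2 : forall x, derivable_pt_lim l1 x (l2 x))
  (Hpos : forall x, 0 < sigma1 x)
  (hlmin : forall a, derivable_pt_lim l a 0 -> forall t, l a <= l t)
  (n : nat -> nat) (N : nat) (X Y : nat -> nat -> R) (k r : nat) (thstar : params)
  (hk1 : (1 <= k)%nat) (hnk : (N - 1 <= n k)%nat)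
  (hmin : nondeg_local_min (pidxs n (S k + r)) (Phi sigma l n (S k + r) N X Y) thstar)
  (hrank : forall l0, (S (S k) <= l0 <= S k + r)%nat ->
             has_rank (Wmat thstar l0) (n (l0 - 1)%nat) (n l0) (n l0)) :
  global_min (Phi sigma l n (S k + r) N X Y) thstar.
Proof.
  set (K := S k) in *.
  set (ps := pidxs n (K + r)) in *.
  set (Phi0 := Phi sigma l n (K + r) N X Y) in *.
  destruct hmin as [hloc [G [H [HG [HH Hns]]]]].
  destruct (SM_Phi sigma sigma1 sigma2 l l1 l2 Hs1 Hs2 Hl1 Hl2 n (K + r) N X Y) as [DP [DP2 HSP]].
  destruct (SM_choice (fun i => fun z => up sigma l n thstar K r z (Y i))
              (fun i => SM_up sigma sigma1 sigma2 l l1 l2 Hs1 Hs2 Hl1 Hl2 n thstar K r (Y i))) as [Du [Du2 HSu]].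
  set (Z := fun i => pre sigma n thstar K (X i)).
  set (F := fun i a => fk sigma n thstar k (X i) a).
  assert (HK1 : (1 <= K)%nat) by (unfold K; lia).
  assert (HKk : (K - 1)%nat = k) by (unfold K; lia).
  assert (HD : forall u, supp_layer u K ->
            DP thstar u = rsum N (fun i => Du i (Z i) (dirof sigma n thstar K u (X i)))).
  { intros u Hu. eapply uniqueness_limite; [apply (proj1 HSP)|].
    eapply dpl_ext; [|apply dpl_rsum; intros i _; apply (proj1 (HSu i))].
    intros t; cbv beta. symmetry. unfold Phi0. apply Phi_dir; auto. }
  assert (Hcrit : forall u, DP thstar u = 0).
  { intros u. apply (crit_line _ _ _ HSP). apply (lmin_line ps). exact hloc. }
  set (delta := fun i j => Du i (Z i) (unit j)).
  assert (HsW : forall a j, supp_layer (ev (IW K a j)) K).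
  { intros a j m' a' j' Hm. unfold ev. split.
    - destruct (pidx_eq_dec (IW m' a' j') (IW K a j)) as [e|]; [inversion e; congruence|reflexivity].
    - destruct (pidx_eq_dec (IB m' j') (IW K a j)) as [e|]; [inversion e|reflexivity]. }
  assert (HsB : forall j, supp_layer (ev (IB K j)) K).
  { intros j m' a' j' Hm. unfold ev. split.
    - destruct (pidx_eq_dec (IW m' a' j') (IB K j)) as [e|]; [inversion e|reflexivity].
    - destruct (pidx_eq_dec (IB m' j') (IB K j)) as [e|]; [inversion e; congruence|reflexivity]. }
  assert (HgW : forall a j, (a < n k)%nat -> rsum N (fun i => F i a * delta i j) = 0).
  { intros a j Ha. rewrite <- (Hcrit (ev (IW K a j))). rewrite HD by auto.
    apply rsum_ext. intros i _. unfold delta.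
    rewrite <- (D1_scale _ _ _ (HSu i)). f_equal.
    apply functional_extensionality. intros j'. unfold dirof. rewrite HKk.
    unfold ev at 2. destruct (pidx_eq_dec (IB K j') (IW K a j)) as [e|]; [inversion e|].
    rewrite Rplus_0_r. unfold unit.
    destruct (Nat.eq_dec j' j).
    - subst j'. rewrite (rsum_ext _ _ (fun a' => if Nat.eq_dec a' a then F i a else 0)).
      + rewrite rsum_single; auto. ring.
      + intros a' _. unfold ev. destruct (pidx_eq_dec (IW K a' j) (IW K a j)) as [e|ne];
          destruct (Nat.eq_dec a' a) as [ea|na].
        * subst a'. unfold F. ring.
        * inversion e; congruence.
        * subst a'. congruence.
        * ring.
    - rewrite (rsum_ext _ _ (fun _ => 0)); [rewrite rsum_zero; ring|].
      intros a' _. unfold ev. destruct (pidx_eq_dec (IW K a' j') (IW K a j)) as [e|]; [inversion e; congruence|ring]. }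
  assert (HgB : forall j, rsum N (fun i => delta i j) = 0).
  { intros j. rewrite <- (Hcrit (ev (IB K j))). rewrite HD by auto.
    apply rsum_ext. intros i _. unfold delta. f_equal.
    apply functional_extensionality. intros j'. unfold dirof.
    rewrite (rsum_ext _ _ (fun _ => 0)).
    - rewrite rsum_zero. unfold ev, unit. destruct (pidx_eq_dec (IB K j') (IB K j)) as [e|ne];
        destruct (Nat.eq_dec j' j) as [ea|na].
      + ring.
      + inversion e; congruence.
      + subst j'. congruence.
      + ring.
    - intros a' _. unfold ev. destruct (pidx_eq_dec (IW K a' j') (IB K j)) as [e|]; [inversion e|ring]. }
  destruct (classic (exists j, (j < n K)%nat /\ exists i, (i < N)%nat /\ delta i j <> 0)) as [[j [Hj Hex]]|Hno].
  - (* Case A: contradiction with non-degeneracy *)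
    exfalso.
    set (M := fun i a => if Nat.ltb a (n k) then F i a else 1).
    destruct (orth_dep N (S (n k)) M (fun i => delta i j) ltac:(lia) Hex) as [c [[a0 [Ha0 Hc0]] Hc]].
    { intros a Ha. unfold M. destruct (Nat.ltb_spec a (n k)).
      - apply HgW; auto.
      - rewrite <- (HgB j). apply rsum_ext. intros; ring. }
    set (w := fun q => match q with
                       | IW m' a j' => if Nat.eq_dec m' K then if Nat.eq_dec j' j then
                                         if Nat.ltb a (n k) then c a else 0 else 0 else 0
                       | IB m' j' => if Nat.eq_dec m' K then if Nat.eq_dec j' j then c (n k) else 0 else 0
                       end).
    assert (Hsw : supp_layer w K).
    { intros m' a j' Hm. unfold w. destruct (Nat.eq_dec m' K); [congruence|]. split; reflexivity. }
    assert (Hdw : forall i, (i < N)%nat -> dirof sigma n thstar K w (X i) = fun _ => 0).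
    { intros i Hi. apply functional_extensionality. intros j'. unfold dirof. rewrite HKk. unfold w.
      destruct (Nat.eq_dec K K); [|congruence]. destruct (Nat.eq_dec j' j).
      - rewrite <- (Hc i Hi). simpl. f_equal.
        + apply rsum_ext. intros a Ha. unfold M. destruct (Nat.ltb_spec a (n k)); [|lia]. unfold F; ring.
        + unfold M. destruct (Nat.ltb_spec (n k) (n k)); [lia|]. ring.
      - rewrite (rsum_ext _ _ (fun _ => 0)); [rewrite rsum_zero; ring|]. intros; ring. }
    assert (Hconst : forall t, Phi0 (vshift thstar t w) = Phi0 thstar).
    { intros t. rewrite <- (vshift0 thstar w) at 2. unfold Phi0. rewrite !Phi_dir; auto.
      apply rsum_ext. intros i Hi. rewrite Hdw; auto. f_equal.
      apply functional_extensionality. intros x. unfold vshift. ring. }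
    assert (Hww : DP2 thstar w w = 0) by (apply (q_zero _ _ _ HSP); auto).
    assert (Hpsd : forall u, 0 <= DP2 thstar u u).
    { intros u. apply (psd_line _ _ _ HSP). apply (lmin_line ps). exact hloc. }
    assert (Hcross : forall p, DP2 thstar (ev p) w = 0) by (intros p; apply (cross_zero _ _ _ HSP); auto).
    assert (Hsupp : forall q, w q <> 0 -> In q ps).
    { intros q Hq. destruct q as [m' a j'|m' j']; unfold w in Hq.
      - destruct (Nat.eq_dec m' K); [|congruence]. destruct (Nat.eq_dec j' j); [|congruence].
        destruct (Nat.ltb_spec a (n k)); [|congruence]. subst m' j'. apply in_pidxs_W; [lia|rewrite HKk; auto|auto].
      - destruct (Nat.eq_dec m' K); [|congruence]. destruct (Nat.eq_dec j' j); [|congruence].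
        subst m' j'. apply in_pidxs_B; [lia|auto]. }
    set (v := fun q => w q / INR (count_occ pidx_eq_dec ps q)).
    assert (Hvw : (fun x => lsum (fun q => v q * ev q x) ps) = w).
    { apply functional_extensionality. intros x. rewrite lsum_ev. unfold v.
      destruct (Req_dec (w x) 0) as [E|E].
      - rewrite E. unfold Rdiv. ring.
      - assert (Hin := Hsupp x E). apply (count_occ_In pidx_eq_dec) in Hin.
        field. apply not_0_INR. lia. }
    assert (Hv0 := Hns v).
    assert (Hprem : forall p, In p ps -> lsum (fun q => H p q * v q) ps = 0).
    { intros p Hp. rewrite (lsum_ext _ (fun q => DP2 thstar (ev p) (ev q) * v q)).
      - rewrite (D2_lsum _ _ _ HSP). rewrite Hvw. apply Hcross.
      - intros q Hq. rewrite (hess_eq ps Phi0 G DP DP2 thstar H HG HSP HH p q Hp Hq). reflexivity. }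
    specialize (Hv0 Hprem).
    set (q0 := if Nat.ltb a0 (n k) then IW K a0 j else IB K j).
    assert (Hwq0 : w q0 = c a0).
    { unfold q0, w. destruct (Nat.ltb_spec a0 (n k)).
      - destruct (Nat.eq_dec K K); [|congruence]. destruct (Nat.eq_dec j j); [|congruence].
        destruct (Nat.ltb_spec a0 (n k)); [reflexivity|lia].
      - destruct (Nat.eq_dec K K); [|congruence]. destruct (Nat.eq_dec j j); [|congruence].
        f_equal. lia. }
    assert (Hq0 : In q0 ps) by (apply Hsupp; rewrite Hwq0; auto).
    specialize (Hv0 q0 Hq0). unfold v in Hv0. rewrite Hwq0 in Hv0.
    apply (count_occ_In pidx_eq_dec) in Hq0.
    assert (INR (count_occ pidx_eq_dec ps q0) <> 0) by (apply not_0_INR; lia).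
    apply Hc0. unfold Rdiv in Hv0. apply Rmult_integral in Hv0. destruct Hv0 as [|E]; auto.
    exfalso. apply Rinv_neq_0_compat in H0. contradiction.
  -
    assert (Hz : forall i j, (i < N)%nat -> (j < n K)%nat -> delta i j = 0).
    { intros i j Hi Hj. destruct (Req_dec (delta i j) 0); auto. exfalso. apply Hno. eauto. }
    assert (Hl : forall i j, (i < N)%nat -> (j < n (K + r))%nat ->
               l1 (fk sigma n thstar (K + r) (X i) j - Y i j) = 0).
    { intros i j Hi Hj. apply (propagate sigma sigma1 sigma2 l l1 l2 Hs1 Hs2 Hl1 Hl2 Hpos n r K thstar (X i) (Y i)); auto.
      intros j0 Hj0. eapply dpl_val; [apply (proj1 (HSu i))|]. apply Hz; auto. }
    intros th. unfold Phi0, Phi. apply rsum_le. intros i Hi. apply rsum_le. intros j Hj.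
    apply hlmin. rewrite <- (Hl i j Hi Hj). apply Hl1.
Qed.

Theorem mainTheorem6
  (sigma l : R -> R) (L N : nat) (n : nat -> nat)
  (X Y : nat -> nat -> R)
  (hX : distinct_data N (n 0%nat) X)
  (hsigma : sigma_assumption sigma)
  (hl : loss_assumption l)
  (hattained : exists th0 : params, global_min (Phi sigma l n L N X Y) th0)
  (k : nat) (hk : (1 <= k <= L - 1)%nat) (hnk : (N - 1 <= n k)%nat)
  (thstar : params)
  (hmin : nondeg_local_min (pidxs n L) (Phi sigma l n L N X Y) thstar)
  (hrank : forall l0, (k + 2 <= l0 <= L)%nat ->
             has_rank (Wmat thstar l0) (n (l0 - 1)%nat) (n l0) (n l0)) :
  global_min (Phi sigma l n L N X Y) thstar.
Proof.
  destruct hsigma as [Han [Hder _]].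
  destruct hl as [[f1 [f2 [Hf1 [Hf2 _]]]] Hlm].
  set (s1 := fun t => proj1_sig (constructive_indefinite_description _ (Hder t))).
  assert (Hs1 : forall t, derivable_pt_lim sigma t (s1 t) /\ 0 < s1 t).
  { intros t. unfold s1. exact (proj2_sig (constructive_indefinite_description _ (Hder t))). }
  assert (Hd2 := analytic_d2 sigma s1 Han (fun t => proj1 (Hs1 t))).
  set (s2 := fun t => proj1_sig (constructive_indefinite_description _ (Hd2 t))).
  assert (Hs2 : forall t, derivable_pt_lim s1 t (s2 t)).
  { intros t. unfold s2. exact (proj2_sig (constructive_indefinite_description _ (Hd2 t))). }
  set (r := (L - S k)%nat).
  assert (HL : L = (S k + r)%nat) by (unfold r; lia).
  clearbody r. subst L.
  apply (core sigma s1 s2 l f1 f2 (fun t => proj1 (Hs1 t)) Hs2 Hf1 Hf2 (fun t => proj2 (Hs1 t)) Hlm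
           n N X Y k r thstar); auto; try lia.
  intros l0 Hl0. apply hrank. lia.
Qed.
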